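(* Let $p$ be an odd prime, $n\ge2$ an integer, and $\mu_{p^n}$ a primitive $p^n$-th root of unity. Then in $\mathbb{Z}[\mu_{p^n}]$, \[ (1-\mu_{p^n})^{p^n-p^{n-1}}\equiv -p \pmod{(1-\mu_{p^n})^{p^n}}. \] *)

(* Defs.v *)
From mathcomp Require Import all_boot all_order all_algebra all_field.
Set Implicit Arguments. Unset Strict Implicit. Unset Printing Implicit Defensive.
Import GRing.Theory Num.Theory.
Local Open Scope ring_scope.

Definition in_Zadj (z x : algC) : Prop :=
  exists q : {poly int}, x = (map_poly intr q).[z].

Definition congr_Zadj (z m a b : algC) : Prop :=
  exists c : algC, in_Zadj z c /\ a - b = c * m.

(* Main.v *)
Set Warnings "-all".
Set Implicit Arguments. Unset Strict Implicit.
Require Import Defs.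
From mathcomp Require Import all_boot all_order all_algebra all_field.
From mathcomp Require Import zify ring.
Import GRing.Theory Num.Theory.
Local Open Scope ring_scope.

Lemma bin_ppow_dvd (p m i : nat) : prime p -> (0 < i < p ^ m)%N -> (p %| 'C(p ^ m, i))%N.
Proof.
move=> pp /andP[i0 iq].
have Hd := mul_bin_diag (p ^ m) i.-1.
rewrite prednK // in Hd.
apply/negP => nd.
have cp : coprime (p ^ m) 'C(p ^ m, i).
  by apply: coprimeXl; rewrite prime_coprime //; apply/negP.
have : (p ^ m %| i * 'C(p ^ m, i))%N by rewrite -Hd dvdn_mulr.
rewrite Gauss_dvdl // => /dvdn_leq => /(_ i0).
by rewrite leqNgt iq.
Qed.

Lemma Zz_nat z (k : nat) : in_Zadj z k%:R.
Proof. exists (k%:R)%:P; rewrite map_polyC hornerC /=. by rewrite natz. Qed.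
Lemma Zz_z z : in_Zadj z z.
Proof. by exists 'X; rewrite map_polyX hornerX. Qed.
Lemma Zz_add z x y : in_Zadj z x -> in_Zadj z y -> in_Zadj z (x + y).
Proof. by move=> [a ->] [b ->]; exists (a + b); rewrite rmorphD hornerD. Qed.
Lemma Zz_opp z x : in_Zadj z x -> in_Zadj z (- x).
Proof. by move=> [a ->]; exists (- a); rewrite rmorphN hornerN. Qed.
Lemma Zz_mul z x y : in_Zadj z x -> in_Zadj z y -> in_Zadj z (x * y).
Proof. by move=> [a ->] [b ->]; exists (a * b); rewrite rmorphM hornerM. Qed.
Lemma Zz_exp z x k : in_Zadj z x -> in_Zadj z (x ^+ k).
Proof. move=> h; elim: k => [|k IH]; first by rewrite expr0 -(mulr1n 1); apply: Zz_nat.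
by rewrite exprS; apply: Zz_mul. Qed.
Lemma Zz_natmul z x k : in_Zadj z x -> in_Zadj z (x *+ k).
Proof. by move=> h; rewrite -mulr_natl; apply: Zz_mul => //; apply: Zz_nat. Qed.
Lemma Zz_sum z m (F : 'I_m -> algC) : (forall i, in_Zadj z (F i)) -> in_Zadj z (\sum_(i < m) F i).
Proof.
move=> h; apply: (big_ind (in_Zadj z)) => //; first by rewrite -(mulr0n 1); apply: Zz_nat.
exact: Zz_add.
Qed.

Lemma binom_gen (p m : nat) (x : algC) : (0 < m)%N ->
  (forall i, (0 < i < m)%N -> (p %| 'C(m, i))%N) ->
  (1 + x) ^+ m - 1 - x ^+ m = p%:R * x * \sum_(i < m.-1) x ^+ i *+ ('C(m, i.+1) %/ p).
Proof.
case: m => // m _ H /=.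
rewrite (addrC 1 x) exprD1n big_ord_recl big_ord_recr /= expr0 bin0 binn mulr1n mulr1n.
have -> : forall a b : algC, 1 + (a + b) - 1 - b = a by move=> a b; rewrite (addrC 1) addrK addrK.
rewrite big_distrr; apply: eq_bigr => i _ /=.
have Hd : (p %| 'C(m.+1, i.+1))%N by apply: H; rewrite /= ltnS ltn_ord.
rewrite -{1}(divnK Hd) mulrnA -mulr_natl exprS -mulrnAr.
rewrite mulr1 -mulrA mulr_natl. by [].
Qed.

Definition Idiv z (k : nat) (x : algC) := exists c, in_Zadj z c /\ x = c * (1 - z) ^+ k.

Lemma Zz_one z : in_Zadj z 1.
Proof. by rewrite -(mulr1n 1); apply: Zz_nat. Qed.
Lemma Zz_pi z : in_Zadj z (1 - z).
Proof. by apply: Zz_add; [apply: Zz_one | apply: Zz_opp; apply: Zz_z]. Qed.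
Lemma I_zero z k : Idiv z k 0.
Proof. by exists 0; split; [rewrite -(mulr0n 1); apply: Zz_nat | rewrite mul0r]. Qed.
Lemma I_add z k x y : Idiv z k x -> Idiv z k y -> Idiv z k (x + y).
Proof. by move=> [a [Ha ->]] [b [Hb ->]]; exists (a + b); split; [apply: Zz_add | rewrite mulrDl]. Qed.
Lemma I_opp z k x : Idiv z k x -> Idiv z k (- x).
Proof. by move=> [a [Ha ->]]; exists (- a); split; [apply: Zz_opp | rewrite mulNr]. Qed.
Lemma I_sub z k x y : Idiv z k x -> Idiv z k y -> Idiv z k (x - y).
Proof. by move=> h1 h2; apply: I_add => //; apply: I_opp. Qed.
Lemma I_mono z k l x : (k <= l)%N -> Idiv z l x -> Idiv z k x.
Proof.
move=> kl [a [Ha ->]]; exists (a * (1 - z) ^+ (l - k)); split.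
  by apply: Zz_mul => //; apply: Zz_exp; apply: Zz_pi.
by rewrite -mulrA -exprD subnK.
Qed.
Lemma I_mulZ z k x y : in_Zadj z y -> Idiv z k x -> Idiv z k (y * x).
Proof. by move=> Hy [a [Ha ->]]; exists (y * a); split; [apply: Zz_mul | rewrite mulrA]. Qed.
Lemma I_mul z k l x y : Idiv z k x -> Idiv z l y -> Idiv z (k + l) (x * y).
Proof.
move=> [a [Ha ->]] [b [Hb ->]]; exists (a * b); split; first by apply: Zz_mul.
by rewrite exprD; rewrite -!mulrA; congr (_ * _); rewrite mulrC -mulrA; congr (_ * _); rewrite mulrC.
Qed.
Lemma I_exp z k m x : Idiv z k x -> Idiv z (k * m) (x ^+ m).
Proof.
move=> h; elim: m => [|m IH].
  by rewrite muln0 expr0; exists 1; split; [apply: Zz_one | rewrite expr0 mulr1].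
by rewrite exprS mulnS; apply: I_mul.
Qed.
Lemma I_pi z k : Idiv z k ((1 - z) ^+ k).
Proof. by exists 1; split; [apply: Zz_one | rewrite mul1r]. Qed.
Lemma I_Z z x : in_Zadj z x -> Idiv z 0 x.
Proof. by move=> h; exists x; split; [ | rewrite expr0 mulr1]. Qed.
Lemma I_sum z k m (F : 'I_m -> algC) : (forall i, Idiv z k (F i)) -> Idiv z k (\sum_(i < m) F i).
Proof. move=> h; apply: (big_ind (Idiv z k)) => //; [apply: I_zero | apply: I_add]. Qed.
Theorem lemma5p10 (p n : nat) (z : algC) :
  prime p -> odd p -> (2 <= n)%N -> (p ^ n)%N.-primitive_root z ->
  congr_Zadj z ((1 - z) ^+ (p ^ n)%N)
    ((1 - z) ^+ (p ^ n - p ^ n.-1)%N) (- (p%:R)).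
Proof.
move=> pp podd n2 prim.
have p3 : (3 <= p)%N.
  have p2 := prime_gt1 pp; case: p pp podd p2 {prim} => [|[|[|p]]] //.
set q := (p ^ n.-1)%N.
have Nq : (p ^ n = q * p)%N by rewrite /q -expnSr prednK //; apply: leq_trans n2.
have q0 : (0 < q)%N by rewrite /q expn_gt0 prime_gt0.
have qodd : odd q by rewrite /q oddX podd orbT.
set e := (q * (p - 1))%N.
have He : (p ^ n - q = e)%N by rewrite Nq /e mulnBr muln1.
rewrite He Nq.
set pi := 1 - z.
have zpi : z = 1 - pi by rewrite /pi subKr.
set D := z ^+ q - 1.
have ZD : in_Zadj z D by apply: Zz_add; [apply: Zz_exp; apply: Zz_z | apply: Zz_opp; apply: Zz_one].
have [A [ZA HA]] : exists A, in_Zadj z A /\ D = - pi ^+ q + p%:R * pi * A.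
  have := @binom_gen p q (- pi) q0 (fun i hi => @bin_ppow_dvd p n.-1 i pp hi).
  set S := \sum_(i < _) _ => HS.
  exists (- S); split.
    by apply: Zz_opp; apply: Zz_sum => i; apply: Zz_natmul; apply: Zz_exp; apply: Zz_opp; apply: Zz_pi.
  have Hn : (- pi) ^+ q = - pi ^+ q by rewrite exprNn -signr_odd qodd expr1 mulN1r.
  rewrite /D zpi.
  move: HS; rewrite Hn => /eqP; rewrite subr_eq => /eqP ->.
  by rewrite mulrN mulNr mulrN addrC.
have [E [ZE HE]] : exists E, in_Zadj z E /\ p%:R = - D ^+ (p - 1) - p%:R * D * E.
  have := @binom_gen p p D (prime_gt0 pp) (fun i hi => prime_dvd_bin pp hi).
  have -> : p.-1 = (p - 2).+1 by lia.
  rewrite big_ord_recl /= expr0 bin1 divnn prime_gt0 // mulr1n.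
  set E := \sum_(i < _) _.
  move=> HS; exists (\sum_(i < p - 2) D ^+ i *+ ('C(p, i.+2) %/ p)); split.
    by apply: Zz_sum => i; apply: Zz_natmul; apply: Zz_exp.
  have H1 : (1 + D) ^+ p = 1.
    by rewrite /D addrC subrK -exprM -Nq (prim_expr_order prim).
  have HE : E = D * \sum_(i < p - 2) D ^+ i *+ ('C(p, i.+2) %/ p).
    by rewrite /E big_distrr; apply: eq_bigr => i _ /=; rewrite exprS mulrnAr.
  have Dn0 : D != 0.
    rewrite /D subr_eq0 -(prim_order_dvd prim); apply/negP => /dvdn_leq => /(_ q0).
    rewrite Nq leqNgt => /negP; apply; rewrite -{1}(muln1 q) ltn_mul2l q0 /=.
    exact: prime_gt1.
  apply: (mulfI Dn0).
  have Hp : D ^+ p = D * D ^+ (p - 1) by rewrite -exprS subn1 prednK // prime_gt0.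
  move: HS; rewrite H1 Hp HE subrr sub0r.
  set X := D ^+ (p - 1); set Y := \sum_(i < _) _ => HS.
  have -> : D * (- X - p%:R * D * Y) = - (D * X) - p%:R * D * (D * Y) by ring.
  rewrite HS; ring.
have Ipi : Idiv z 1 pi by rewrite /pi -(expr1 (1 - z)); apply: I_pi.
have F3 : forall k, (k <= e)%N -> Idiv z k p%:R.
  elim => [_|k IH ke].
    by apply: I_Z; apply: Zz_nat.
  have Ip := IH (ltnW ke).
  set m := minn q k.+1.
  have mq : (m <= q)%N by rewrite /m geq_minl.
  have mk : (m <= k.+1)%N by rewrite /m geq_minr.
  have m0 : (0 < m)%N by rewrite /m leq_min q0.
  have ID : Idiv z m D.
    rewrite HA; apply: I_add.
      by apply: I_opp; apply: (I_mono mq); apply: I_pi.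
    rewrite mulrC; apply: I_mulZ => //; apply: (I_mono mk).
    by rewrite -addn1; apply: I_mul.
  have km : (k.+1 <= m * (p - 1))%N.
    rewrite /m; case: (leqP q k.+1) => h; first exact: ke.
    rewrite -{1}(muln1 k.+1) leq_mul2l /=; lia.
  rewrite HE; apply: I_sub.
    by apply: I_opp; apply: (I_mono km); apply: I_exp.
  rewrite mulrC; apply: I_mulZ => //; apply: (I_mono (l := (k + m)%N)); first lia.
  by apply: I_mul.
have Ipe := F3 e (leqnn e).
have IpA : Idiv z e.+1 (p%:R * pi * A).
  by rewrite mulrC; apply: I_mulZ => //; rewrite -addn1; apply: I_mul.
have IDq : Idiv z q D.
  rewrite HA; apply: I_add; first by apply: I_opp; apply: I_pi.
  apply: (I_mono _ IpA); rewrite /e; nia.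
have key : Idiv z (q * p) (pi ^+ e + p%:R).
  have Hpe : pi ^+ e = (- pi ^+ q) ^+ (p - 1).
    by rewrite /e exprM exprNn -signr_odd oddB ?podd ?prime_gt0 // expr0 mul1r.
  rewrite {1}HE.
  have -> : pi ^+ e + (- D ^+ (p - 1) - p%:R * D * E)
      = - (D ^+ (p - 1) - pi ^+ e) - p%:R * D * E by ring.
  apply: I_sub; last first.
    rewrite mulrC; apply: I_mulZ => //; apply: (I_mono (l := (e + q)%N)).
      by rewrite /e; nia.
    exact: I_mul.
  apply: I_opp; rewrite Hpe subrXX.
  have -> : D - - pi ^+ q = p%:R * pi * A by rewrite HA opprK addrAC addNr add0r.
  apply: (I_mono (l := (e.+1 + q * (p - 1).-1)%N)); first by rewrite /e; nia.
  apply: I_mul => //; apply: I_sum => i.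
  have hi : (i <= (p - 1).-1)%N by rewrite -ltnS prednK ?ltn_ord // subn_gt0 prime_gt1.
  rewrite -[in X in Idiv z X _](subnK hi) mulnDr; apply: I_mul; apply: I_exp => //.
  by apply: I_opp; apply: I_pi.
move: key => [c [Zc Hc]]; exists c; split => //.
by rewrite opprK.
Qed.
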